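(* Let $w$ be a linearly recurrent infinite word over a finite alphabet $\Sigma$. Suppose there exists a positive constant $C$ such that for every sufficiently large $n$ one has $\sum_{m\leq n}\mathit{ASF}_{w}(m)\geq Cn^2$. Then $w$ is abelian-square rich.
   Context: For a word $u$ and letter $a$, $|u|_a$ is the number of occurrences of $a$ in $u$; the Parikh vector of $u$ over $\Sigma=\{a_1,\dots,a_\sigma\}$ is $P(u)=(|u|_{a_1},\dots,|u|_{a_\sigma})$. An abelian square is a word $v_1v_2$ with $P(v_1)=P(v_2)$. For a finite or infinite word $w$, $\mathit{ASF}_w(m)$ denotes the number of distinct factors of $w$ of length $m$ that are abelian squares. The factor complexity $p_w(n)$ is the number of distinct factors of $w$ of length $n$. The recurrence index $R_w(n)$ is the least $m$ such that every factor of $w$ of length $m$ contains all factors of $w$ of length $n$; $w$ is uniformly recurrent if $R_w(n)$ is defined for all $n$, and linearly recurrent if moreover $R_w(n)/n$ is bounded. An infinite word $w$ is abelian-square rich if there is a positive constant $C$ such that for all sufficiently large $n$, $\frac{1}{p_w(n)}\sum_{v}(\text{number of distinct abelian square factors of } v)\geq Cn^2$, where the sum ranges over the factors $v$ of $w$ of length $n$. *)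

(* Defs.v *)
From mathcomp Require Import all_boot all_order all_algebra.
From mathcomp Require Import boolp reals.
Set Implicit Arguments. Unset Strict Implicit. Unset Printing Implicit Defensive.
Import Order.TTheory GRing.Theory Num.Theory.

Section Words.
Variable T : finType.

Definition factor_at (w : nat -> T) (i n : nat) : seq T :=
  [seq w (i + k) | k <- iota 0 n].

Definition is_factor (w : nat -> T) (u : seq T) : Prop :=
  exists i, u = factor_at w i (size u).

Definition is_subfactor (u v : seq T) : Prop :=
  exists i, i + size u <= size v /\ u = take (size u) (drop i v).

Definition factors (w : nat -> T) (n : nat) : {set n.-tuple T} :=
  [set t : n.-tuple T | `[< is_factor w t >]].

Definition complexity (w : nat -> T) (n : nat) : nat := #|factors w n|.

Definition abelian_square (u : seq T) : Prop :=
  exists v1 v2, u = v1 ++ v2 /\ forall a : T, count_mem a v1 = count_mem a v2.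

Definition ASF (w : nat -> T) (m : nat) : nat :=
  #|[set t in factors w m | `[< abelian_square t >]]|.

Definition num_asq_factors (v : seq T) : nat :=
  \sum_(k < (size v).+1)
     #|[set t : k.-tuple T | `[< is_subfactor t v /\ abelian_square t >]]|.

Definition recurrent_within (w : nat -> T) (n m : nat) : Prop :=
  forall u, size u = m -> is_factor w u ->
  forall v, size v = n -> is_factor w v -> is_subfactor v u.

(* R_w(n) is defined for all n. *)
Definition uniformly_recurrent (w : nat -> T) : Prop :=
  forall n, exists m, recurrent_within w n m.

(* Moreover R_w(n)/n is bounded (n >= 1): R_w(n) <= K n, i.e. some m <= K n works. *)
Definition linearly_recurrent (w : nat -> T) : Prop :=
  uniformly_recurrent w /\
  exists K : nat, forall n, 0 < n -> exists m, m <= K * n /\ recurrent_within w n m.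

Local Open Scope ring_scope.

Definition abelian_square_rich (R : realType) (w : nat -> T) : Prop :=
  exists C : R, 0 < C /\ exists N : nat, forall n : nat, (N <= n)%N ->
    (complexity w n)%:R^-1 *
      (\sum_(t in factors w n) (num_asq_factors t)%:R) >= C * n%:R ^+ 2.

End Words.

(* Main.v *)
Require Import Defs.
From mathcomp Require Import all_boot all_order all_algebra.
From mathcomp Require Import boolp reals.
From mathcomp Require Import zify.
Import Order.TTheory GRing.Theory Num.Theory.
Local Open Scope ring_scope.

Lemma size_fa (T : finType) (w : nat -> T) i n : size (factor_at w i n) = n.
Proof. by rewrite /factor_at size_map size_iota. Qed.

Lemma fa_sub (T : finType) (w : nat -> T) i n k a : (k + a <= n)%N ->
  take a (drop k (factor_at w i n)) = factor_at w (i + k) a.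
Proof.
move=> H; apply: (@eq_from_nth _ (w 0%N)).
  rewrite size_take size_drop !size_fa.
  case: ifP => Ha; [done | move/negbT: Ha; rewrite -leqNgt; lia].
move=> j; rewrite size_take size_drop !size_fa => Hj.
have ja : (j < a)%N by move: Hj; case: ifP => Ha; [done | move/negbT: Ha; rewrite -leqNgt; lia].
rewrite nth_take // nth_drop /factor_at.
rewrite (nth_map 0%N) ?size_iota; last lia.
rewrite (nth_map 0%N) ?size_iota //.
rewrite !nth_iota; try lia. by rewrite !add0n addnA.
Qed.

Lemma fa_factor (T : finType) (w : nat -> T) i n : is_factor w (factor_at w i n).
Proof. by exists i; rewrite size_fa. Qed.

Theorem lemma1 (R : realType) (T : finType) (w : nat -> T) :
  linearly_recurrent w ->
  (exists C : R, 0 < C /\ exists N : nat, forall n : nat, (N <= n)%N ->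
     \sum_(m < n.+1) (ASF w m)%:R >= C * n%:R ^+ 2) ->
  abelian_square_rich R w.
Proof.
move=> [_ [K HK]] [C [C0 [N HN]]].
pose L := K.+1.
exists (C / (4 * L ^ 2)%N%:R); split.
  by rewrite divr_gt0 // ltr0n muln_gt0 expn_gt0.
exists (L * N.+2)%N => n Hn.
pose n' := (n %/ L)%N.
have n'N : (N.+2 <= n')%N by rewrite leq_divRL // mulnC.
have [m [Hm Hrec]] := HK n' (leq_trans (isT : (0 < N.+2)%N) n'N).
have nL : (n' * L <= n)%N by exact: leq_divM.
have mn : (m <= n)%N.
  apply: (leq_trans Hm); apply: leq_trans nL; rewrite mulnC leq_pmul2l //; lia.
have key : forall t : n.-tuple T, t \in factors w n ->
    (\sum_(k < n'.+1) ASF w k <= num_asq_factors t)%N.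
  move=> t; rewrite inE => /asboolP [i Hi]; rewrite size_tuple in Hi.
  rewrite /num_asq_factors size_tuple.
  rewrite (big_ord_widen n.+1 (fun k => ASF w k)); last first.
    apply: leq_trans nL; rewrite -{1}(muln1 n'); apply: leq_mul => //; lia.
  rewrite big_mkcond /=; apply: leq_sum => k _; case: ifP => // kn.
  apply: subset_leq_card; apply/subsetP => s; rewrite !inE => /andP [Hs Ha].
  apply/asboolP; split; last exact/asboolP.
  move: Hs => /asboolP [j Hj]; rewrite size_tuple in Hj.
  have := Hrec (factor_at w i m) (size_fa _ _ _ _) (fa_factor _ _ _ _)
     (factor_at w j n') (size_fa _ _ _ _) (fa_factor _ _ _ _).
  case=> l [Hl E]; rewrite !size_fa in Hl E.
  rewrite fa_sub // in E.
  have lk : (l + k <= n)%N by move: kn Hl mn; clear -n; lia.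
  exists l; rewrite !size_tuple; split=> //.
  rewrite Hj Hi fa_sub //.
  have -> : factor_at w j k = take k (factor_at w j n').
    by rewrite -(drop0 (factor_at w j n')) fa_sub ?addn0 //; lia.
  by rewrite E -(drop0 (factor_at w (i + l) n')) fa_sub ?addn0 //; lia.
have p0 : (0 < complexity w n)%N.
  apply/card_gt0P.
  have sz : size (factor_at w 0 n) == n by rewrite size_fa.
  exists (Tuple sz); rewrite inE; apply/asboolP; exists 0%N.
  by rewrite /= size_fa.
have HA : C * n'%:R ^+ 2 <= (\sum_(k < n'.+1) ASF w k)%N%:R.
  by rewrite natr_sum; apply: HN; lia.
have n2 : (n < 2 * L * n')%N.
  have h1 := ltn_ceil n (isT : (0 < L)%N).
  rewrite -/n' in h1.
  have h2 : (L <= L * n')%N by rewrite -{1}(muln1 L) leq_mul2l; lia.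
  lia.
apply: (le_trans _ (_ : (\sum_(k < n'.+1) ASF w k)%N%:R <= _)).
  apply: le_trans HA.
  have -> : C * n'%:R ^+ 2 = C / (4 * L ^ 2)%N%:R * ((4 * L ^ 2)%N%:R * n'%:R ^+ 2).
    rewrite mulrA -(mulrA C) mulVf ?mulr1 //.
    by rewrite pnatr_eq0 muln_eq0 negb_or expn_eq0.
  apply: ler_wpM2l.
    by rewrite divr_ge0 // ltW.
  rewrite -!natrX -natrM ler_nat; nia.
rewrite ler_pdivlMl ?ltr0n // -natrM -natr_sum ler_nat.
rewrite /complexity -sum_nat_const.
by apply: leq_sum => t Ht; apply: key.
Qed.
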